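(* Consider an execution of the Adaptive Algorithm. If position $p_j$ interviews applicant $a_i$ and $i<j$, then $a_i$ has been interviewed by every position $p_{j'}$ with $i\le j'<j$.
   Context: Model. Let $A=\{a_1,\dots,a_n\}$ be a set of applicants and $P=\{p_1,\dots,p_n\}$ a set of positions. Each applicant $a_i$ has a publicly known value $u_i\in\mathbb R$ and each position $p_j$ a publicly known value $v_j\in\mathbb R$, indexed so that $u_1\ge u_2\ge\dots\ge u_n$ and $v_1\ge v_2\ge\dots\ge v_n$. The random variables $\epsilon^A_{ij}$, $\epsilon^P_{ji}$ ($i,j\in[n]$) are mutually independent and identically distributed according to a known distribution symmetric about $0$ (mean zero). The utility of $a_i$ for $p_j$ is $v_j+\epsilon^A_{ij}$ and the utility of $p_j$ for $a_i$ is $u_i+\epsilon^P_{ji}$; the values $\epsilon^A_{ij},\epsilon^P_{ji}$ become known only when $a_i$ and $p_j$ interview each other. The observed utility $v^o_{ij}$ of $a_i$ for $p_j$ equals $v_j+\epsilon^A_{ij}$ if $a_i,p_j$ have interviewed and $v_j$ otherwise; $u^o_{ji}$ is defined symmetrically ($u_i+\epsilon^P_{ji}$ or $u_i$). Write $p_j\succ_{a_i}p_{j'}$ iff $v^o_{ij}>v^o_{ij'}$ and $a_i\succ_{p_j}a_{i'}$ iff $u^o_{ji}>u^o_{ji'}$ (ties broken in favor of the smaller index); every agent prefers any partner to being unmatched. For a matching $\mu$, $\mu(x)$ denotes the partner of $x$ ($\emptyset$ if unmatched). Adaptive Algorithm. Initially all agents are unmatched and $v^o_{ij}=v_j$, $u^o_{ji}=u_i$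 for all $i,j$. For an unmatched applicant $a$, let $\beta(a)$ be $a$'s most preferred position (w.r.t. current observed utilities) that has not yet rejected $a$. While some applicant is unmatched: let $j^*$ be the smallest index such that $\beta(a_i)=p_{j^*}$ for some unmatched $a_i$; let $a_{i^*}$ be $p_{j^*}$'s favorite applicant among $\{a_i:\beta(a_i)=p_{j^*},\mu(a_i)=\emptyset\}$. If $a_{i^*},p_{j^*}$ have not interviewed and ($i^*\le j^*$ or $a_{i^*}\succ_{p_{j^*}}\mu(p_{j^*})$), then they interview and $v^o_{i^*j^*},u^o_{j^*i^*}$ are updated. Otherwise: if $\mu(p_{j^*})\succ_{p_{j^*}}a_{i^*}$, then $p_{j^*}$ rejects $a_{i^*}$; else $p_{j^*}$ rejects $\mu(p_{j^*})$ (if nonempty) and $a_{i^*},p_{j^*}$ become matched. When all applicants are matched, output $\mu$. *)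

(* Defs.v *)
From mathcomp Require Import all_boot all_order all_algebra.
Set Implicit Arguments. Unset Strict Implicit. Unset Printing Implicit Defensive.
Import Order.TTheory GRing.Theory Num.Theory.
Local Open Scope ring_scope.

(* Indices are 0-based: applicant a_{i+1} is (i : 'I_n), position p_{j+1} is (j : 'I_n). *)

(* A market together with one realization of the noise terms.
   epsA i j = eps^A_{ij} (applicant i's noise for position j),
   epsP j i = eps^P_{ji} (position j's noise for applicant i). *)
Record market (R : realFieldType) (n : nat) := Market {
  uval : 'I_n -> R;
  vval : 'I_n -> R;
  epsA : 'I_n -> 'I_n -> R;
  epsP : 'I_n -> 'I_n -> R }.

(* State of the algorithm. (i,j) \in interviewed: a_i and p_j have interviewed.
   (i,j) \in rejected: p_j has rejected a_i.  matching i = Some j: mu(a_i) = p_j. *)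
Record state (n : nat) := State {
  interviewed : {set 'I_n * 'I_n};
  rejected : {set 'I_n * 'I_n};
  matching : {ffun 'I_n -> option 'I_n} }.

Inductive action (n : nat) :=
| Interview of 'I_n & 'I_n
| Reject of 'I_n & 'I_n
| Match of 'I_n & 'I_n.

Section Alg.
Context {R : realFieldType} {n : nat} (M : market R n).

Definition vo (s : state n) (i j : 'I_n) : R :=
  if (i, j) \in interviewed s then vval M j + epsA M i j else vval M j.
Definition uo (s : state n) (j i : 'I_n) : R :=
  if (i, j) \in interviewed s then uval M i + epsP M j i else uval M i.

(* p_j strictly preferred to p_j' by a_i (ties broken in favour of smaller index) *)
Definition prefA (s : state n) (i j j' : 'I_n) : bool :=
  (vo s i j' < vo s i j) || ((vo s i j == vo s i j') && (j < j')%N).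
Definition prefP (s : state n) (j i i' : 'I_n) : bool :=
  (uo s j i' < uo s j i) || ((uo s j i == uo s j i') && (i < i')%N).

Definition unmatched (s : state n) (i : 'I_n) : bool := matching s i == None.

Definition muP (s : state n) (j : 'I_n) : option 'I_n :=
  [pick i | matching s i == Some j].

Definition beta (s : state n) (i : 'I_n) : option 'I_n :=
  [pick j | ((i, j) \notin rejected s) &&
            [forall j', ((i, j') \notin rejected s) ==> (j' == j) || prefA s i j j']].

Definition proposes (s : state n) (j i : 'I_n) : bool :=
  unmatched s i && (beta s i == Some j).

Definition jstar (s : state n) : option 'I_n :=
  [pick j | [exists i, proposes s j i] &&
            [forall j', [exists i, proposes s j' i] ==> (j <= j')%N]].

Definition istar (s : state n) (j : 'I_n) : option 'I_n :=
  [pick i | proposes s j i &&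
            [forall i', proposes s j i' ==> (i' == i) || prefP s j i i']].

(* The action performed in the current iteration (None = the algorithm stops). *)
Definition next_action (s : state n) : option (action n) :=
  if [forall i, ~~ unmatched s i] then None else
  match jstar s with
  | None => None
  | Some j =>
    match istar s j with
    | None => None
    | Some i =>
      let better := match muP s j with
                    | None => true (* any partner preferred to being unmatched *)
                    | Some i' => prefP s j i i' end in
      if ((i, j) \notin interviewed s) && ((i <= j)%N || better)
      then Some (Interview i j)
      else match muP s j with
           | Some i' => if prefP s j i' i then Some (Reject i j) else Some (Match i j)
           | None => Some (Match i j)
           end
    end
  end.

Definition apply_action (s : state n) (a : action n) : state n :=
  match a with
  | Interview i j => State ((i, j) |: interviewed s) (rejected s) (matching s)
  | Reject i j => State (interviewed s) ((i, j) |: rejected s) (matching s)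
  | Match i j =>
    match muP s j with
    | None => State (interviewed s) (rejected s)
                    [ffun k => if k == i then Some j else matching s k]
    | Some i' => State (interviewed s) ((i', j) |: rejected s)
                    [ffun k => if k == i then Some j
                               else if k == i' then None else matching s k]
    end
  end.

Definition step (s : state n) : state n :=
  match next_action s with None => s | Some a => apply_action s a end.

Definition init_state : state n := State set0 set0 [ffun => None].

(* state after k iterations (stationary once the algorithm has stopped) *)
Definition run (k : nat) : state n := iter k step init_state.

End Alg.

(* Main.v *)
Require Import Defs.
From mathcomp Require Import all_boot all_order all_algebra.
Import Order.TTheory GRing.Theory Num.Theory.
Local Open Scope ring_scope.

Section S.
Context (R : realFieldType) (n : nat) (M : market R n).

Lemma next_RM (s : state n) (i j : 'I_n) :
  (next_action M s = Some (Reject i j) \/ next_action M s = Some (Match i j)) ->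
  (i <= j)%N -> (i, j) \in interviewed s.
Proof.
rewrite /next_action; case: ifP => _; first by case.
case: (jstar M s) => [j0|]; last by case.
case: (istar M s j0) => [i0|]; last by case.
case E: (muP s j0) => [i'|]; case: ifP => H; try case: ifP => _;
  try by move=> [] [] //.
all: move=> HH; have [<- <-] : i0 = i /\ j0 = j by case: HH => [] [] //.
all: by move=> le; apply: contraFT H => ->; rewrite le.
Qed.

Definition inv (s : state n) :=
  (forall i j : 'I_n, (i, j) \in rejected s -> (i <= j)%N -> (i, j) \in interviewed s) /\
  (forall i j : 'I_n, matching s i = Some j -> (i <= j)%N -> (i, j) \in interviewed s).

Lemma inv_step s : inv s -> inv (step M s).
Proof.
move=> [I1 I2]; rewrite /step.
case E: (next_action M s) => [[i j|i j|i j]|]; last by split.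
- split=> a b /=.
  + by move=> /I1 H /H; rewrite !inE => ->; rewrite orbT.
  + by move=> /I2 H /H; rewrite !inE => ->; rewrite orbT.
- split=> a b /=; last exact: I2.
  rewrite !inE => /orP[/eqP [-> ->]|/I1 //].
  by apply: next_RM; left.
- have Hij : (i <= j)%N -> (i, j) \in interviewed s by apply: next_RM; right.
  rewrite /apply_action; case P: (muP s j) => [i'|].
  + have Hm : matching s i' = Some j.
      by move: P; rewrite /muP; case: pickP => // x /eqP Hx [] <-.
    split=> a b /=.
    * rewrite !inE => /orP[/eqP [-> ->]|/I1 //]. exact: I2.
    * rewrite ffunE; case: eqP => [-> [] <- //|_].
      case: eqP => // _; exact: I2.
  + split=> a b /=; first exact: I1.
    rewrite ffunE; case: eqP => [-> [] <- //|_]; exact: I2.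
Qed.

Lemma inv_run k : inv (run M k).
Proof.
elim: k => [|k IH].
  by split=> a b /=; rewrite ?inE // ffunE.
by rewrite /run iterS; apply: inv_step.
Qed.

End S.

Theorem mainTheorem3 (R : realFieldType) (n : nat) (M : market R n) :
  (forall i i' : 'I_n, (i <= i')%N -> uval M i' <= uval M i) ->
  (forall j j' : 'I_n, (j <= j')%N -> vval M j' <= vval M j) ->
  forall (k : nat) (i j : 'I_n),
    next_action M (run M k) = Some (Interview i j) ->
    (i < j)%N ->
    forall j' : 'I_n, (i <= j')%N -> (j' < j)%N ->
      (i, j') \in interviewed (run M k).
Proof.
move=> _ Hv k i j; have [I1 _] := @inv_run R n M k.
set s := run M k => E lt j' le1 lt2.
have [Hnint Hpr] : (i, j) \notin interviewed s /\ proposes M s j i.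
  move: E; rewrite /next_action; case: ifP => _ //.
  case Ej: (jstar M s) => [j0|] //.
  case Ei: (istar M s j0) => [i0|] //.
  have Hp : proposes M s j0 i0.
    by move: Ei; rewrite /istar; case: pickP => // x /andP[Hx _] [] <-.
  case: ifP => H.
    by case=> <- <-; case/andP: H => ->.
  by case: (muP s j0) => [i'|] //; case: ifP.
case/andP: Hpr => _ /eqP; rewrite /beta; case: pickP => // x /andP[_ /forallP F] [] Ex.
subst x.
case Hr: ((i, j') \in rejected s); first by apply: I1.
case Hi: ((i, j') \in interviewed s) => //.
have := F j'; rewrite Hr /= => /orP[/eqP Eq|].
  by move: lt2; rewrite Eq ltnn.
rewrite /prefA /vo Hi (negbTE Hnint) => /orP[|/andP[_]].
  by rewrite ltNge Hv // ltnW.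
by rewrite ltnNge ltnW.
Qed.
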